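(* For causal stable systems $P_1,P_2:\mathcal{L}_{2e+}^n\to\mathcal{L}_{2e+}^n$, the cascaded system $P=P_2P_1$ satisfies $$\theta(P)\le\theta(P_1)+\theta(P_2).$$
   Context: For $n\ge1$, $\mathcal{L}_2^n$ is the set of measurable $u:\mathbb{R}\to\mathbb{R}^n$ with $\|u\|_2^2=\int_{-\infty}^{\infty}|u(t)|^2dt<\infty$, with inner product $\langle u,v\rangle=\int u(t)^Tv(t)\,dt$; $\mathcal{L}_{2+}=\{u\in\mathcal{L}_2: u(t)=0\ \text{for}\ t<0\}$. For $T\ge0$, $(\Gamma_Tu)(t)=u(t)$ for $t\le T$ and $0$ for $t>T$; $\mathcal{L}_{2e+}=\{u: \Gamma_Tu\in\mathcal{L}_{2+}\ \forall T\ge0\}$. A system is an operator $P:\mathcal{L}_{2e+}\to\mathcal{L}_{2e+}$ with $P0=0$, $P\ne0$; it is causal if $\Gamma_TP=\Gamma_TP\Gamma_T$ for all $T\ge0$, and a causal system is stable if $Pu\in\mathcal{L}_{2+}$ for all $u\in\mathcal{L}_{2+}$ and $\sup_{0\ne u\in\mathcal{L}_{2+}}\|Pu\|_2/\|u\|_2<\infty$. The singular angle of a causal stable system $P$ is $\theta(P)\in[0,\pi]$ with $\cos\theta(P)=\inf\{\langle u,Pu\rangle/(\|u\|_2\|Pu\|_2): 0\neq u\in\mathcal{L}_{2+},\ Pu\neq0\}$. *)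

(* Defs.v *)
From HB Require Import structures.
From mathcomp Require Import all_boot all_order all_algebra.
From mathcomp Require Import all_classical all_reals all_analysis.
Set Implicit Arguments. Unset Strict Implicit. Unset Printing Implicit Defensive.
Import Order.TTheory GRing.Theory Num.Theory.
Import numFieldNormedType.Exports.
Local Open Scope classical_set_scope.
Local Open Scope ring_scope.

Section Signals.
Variables (R : realType) (n : nat).

Definition signal := R -> 'rV[R]_n.

Notation mu := (@lebesgue_measure R).

Definition sqnorm (x : 'rV[R]_n) : R := \sum_(i < n) x ord0 i ^+ 2.
Definition dotv (x y : 'rV[R]_n) : R := \sum_(i < n) x ord0 i * y ord0 i.

Definition ae_equal (u v : signal) : Prop := {ae mu, forall t, u t = v t}.

Definition in_L2 (u : signal) : Prop :=
  (forall i : 'I_n, measurable_fun setT (fun t => u t ord0 i)) /\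
  (\int[mu]_t (sqnorm (u t))%:E < +oo)%E.

Definition in_L2p (u : signal) : Prop :=
  in_L2 u /\ {ae mu, forall t, t < 0 -> u t = 0}.

Definition Gam (T : R) (u : signal) : signal :=
  fun t => if t <= T then u t else 0.

Definition in_L2ep (u : signal) : Prop :=
  forall T, 0 <= T -> in_L2p (Gam T u).

Definition l2norm (u : signal) : R := Num.sqrt (Rintegral mu setT (fun t => sqnorm (u t))).
Definition l2inner (u v : signal) : R := Rintegral mu setT (fun t => dotv (u t) (v t)).

(* A system: an operator on L2e+^n (well defined on a.e.-classes), with P0 = 0, P <> 0. *)
Definition is_system (P : signal -> signal) : Prop :=
  (forall u, in_L2ep u -> in_L2ep (P u)) /\
  (forall u v, in_L2ep u -> in_L2ep v -> ae_equal u v -> ae_equal (P u) (P v)) /\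
  ae_equal (P (fun _ => 0)) (fun _ => 0) /\
  (exists u, in_L2ep u /\ ~ ae_equal (P u) (fun _ => 0)).

Definition causal (P : signal -> signal) : Prop :=
  forall u, in_L2ep u -> forall T, 0 <= T ->
    ae_equal (Gam T (P u)) (Gam T (P (Gam T u))).

Definition stable (P : signal -> signal) : Prop :=
  (forall u, in_L2p u -> in_L2p (P u)) /\
  (exists c : R, forall u, in_L2p u -> l2norm u != 0 ->
      l2norm (P u) / l2norm u <= c).

Definition causal_stable_system (P : signal -> signal) : Prop :=
  [/\ is_system P, causal P & stable P].

Definition singular_angle (P : signal -> signal) : R :=
  acos (inf [set l2inner u (P u) / (l2norm u * l2norm (P u)) |
             u in [set u | in_L2p u /\ l2norm u != 0 /\ l2norm (P u) != 0]]).

End Signals.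

(* Main.v *)
Require Import Defs.
From HB Require Import structures.
From mathcomp Require Import all_boot all_order all_algebra.
From mathcomp Require Import all_classical all_reals all_analysis.
From mathcomp Require Import ring lra.
Set Implicit Arguments. Unset Strict Implicit. Unset Printing Implicit Defensive.
Import Order.TTheory GRing.Theory Num.Theory.
Import numFieldNormedType.Exports.
Local Open Scope classical_set_scope.
Local Open Scope ring_scope.

Section Alg.
Variable R : realType.

Lemma quad_disc (A B C : R) : 0 <= A -> 0 <= C ->
  (forall k l : R, 0 <= A * k^+2 + 2 * B * k * l + C * l^+2) -> B^+2 <= A * C.
Proof.
move=> A0 C0 Q.
have h1 := Q (-B) A. have h2 := Q C (-B). have h3 := Q 1 (-B).
have [Ap|A0'] := ltrP 0 A.
  nra.
have [Cp|C0'] := ltrP 0 C.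
  nra.
have -> : A = 0 by apply/eqP; rewrite eq_le A0' A0.
have -> : C = 0 by apply/eqP; rewrite eq_le C0' C0.
move: h3; have -> : A = 0 by apply/eqP; rewrite eq_le A0' A0.
have -> : C = 0 by apply/eqP; rewrite eq_le C0' C0.
nra.
Qed.

Lemma acos_le (a b : R) : -1 <= a -> a <= b -> b <= 1 -> acos b <= acos a.
Proof.
move=> a1 ab b1.
have ia : acos a \in `[0, pi] by rewrite in_itv /= acos_ge0 ?acos_lepi ?a1 ?(le_trans ab b1).
have ib : acos b \in `[0, pi] by rewrite in_itv /= acos_ge0 ?acos_lepi ?b1 ?(le_trans a1 ab).
rewrite leNgt -ltr_cos // !acosK ?in_itv /= ?a1 ?b1 ?(le_trans ab b1) ?(le_trans a1 ab) //.
by rewrite -leNgt.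
Qed.

Lemma gram2 (x y z : R) : -1 <= x <= 1 -> -1 <= y <= 1 ->
  (forall k l : R, 0 <= (1 - x^+2) * k^+2 + 2 * (z - x * y) * k * l + (1 - y^+2) * l^+2) ->
  cos (acos x + acos y) <= z.
Proof.
move=> hx hy Q.
rewrite cosD !acosK ?in_itv //= !sin_acos //.
have A0 : 0 <= 1 - x^+2 by nra.
have C0 : 0 <= 1 - y^+2 by nra.
have hd := quad_disc A0 C0 Q.
rewrite -sqrtrM //.
have h : `|z - x * y| <= Num.sqrt ((1 - x ^+ 2) * (1 - y ^+ 2)).
  by rewrite -sqrtr_sqr ler_sqrt ?mulr_ge0.
have : -(z - x*y) <= `|z - x*y| by rewrite -normrN ler_norm.
lra.
Qed.

Lemma cs2 (g11 g22 g12 : R) : 0 < g11 -> 0 < g22 ->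
  (forall p q : R, 0 <= p^+2 * g11 + q^+2 * g22 + 2 * p * q * g12) ->
  -1 <= g12 / (Num.sqrt g11 * Num.sqrt g22) <= 1.
Proof.
move=> h1 h2 Q.
set a := Num.sqrt g11; set b := Num.sqrt g22.
have a0 : 0 < a by rewrite sqrtr_gt0.
have b0 : 0 < b by rewrite sqrtr_gt0.
have e1 : g11 = a^+2 by rewrite sqr_sqrtr // ltW.
have e2 : g22 = b^+2 by rewrite sqr_sqrtr // ltW.
set x := g12 / (a * b).
have hq : forall k l : R, 0 <= 1 * k^+2 + 2 * x * k * l + 1 * l^+2.
  move=> k l; have := Q (k / a) (l / b).
  suff -> : (k / a) ^+ 2 * g11 + (l / b) ^+ 2 * g22 + 2 * (k / a) * (l / b) * g12
     = 1 * k^+2 + 2 * x * k * l + 1 * l^+2 by [].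
  rewrite e1 e2 /x; field; apply/andP; split; exact: lt0r_neq0.
have := quad_disc ler01 ler01 hq.
rewrite mulr1 => hx.
apply/andP; split; nra.
Qed.

Lemma tri3 (g11 g22 g33 g12 g23 g13 : R) : 0 < g11 -> 0 < g22 -> 0 < g33 ->
  (forall p q r : R, 0 <= p^+2 * g11 + q^+2 * g22 + r^+2 * g33
        + 2 * p * q * g12 + 2 * q * r * g23 + 2 * p * r * g13) ->
  cos (acos (g12 / (Num.sqrt g11 * Num.sqrt g22)) + acos (g23 / (Num.sqrt g22 * Num.sqrt g33)))
   <= g13 / (Num.sqrt g11 * Num.sqrt g33).
Proof.
move=> h1 h2 h3 Q.
have hx : -1 <= g12 / (Num.sqrt g11 * Num.sqrt g22) <= 1.
  by apply: cs2 => // p q; have := Q p q 0; rewrite !(expr0n, mul0r, mulr0, addr0).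
have hy : -1 <= g23 / (Num.sqrt g22 * Num.sqrt g33) <= 1.
  by apply: cs2 => // p q; have := Q 0 p q; rewrite !(expr0n, mul0r, mulr0, addr0, add0r).
apply: gram2 => //.
move: hx hy.
set a := Num.sqrt g11; set b := Num.sqrt g22; set c := Num.sqrt g33.
have a0 : 0 < a by rewrite sqrtr_gt0.
have b0 : 0 < b by rewrite sqrtr_gt0.
have c0 : 0 < c by rewrite sqrtr_gt0.
have e1 : g11 = a^+2 by rewrite sqr_sqrtr // ltW.
have e2 : g22 = b^+2 by rewrite sqr_sqrtr // ltW.
have e3 : g33 = c^+2 by rewrite sqr_sqrtr // ltW.
set x := g12 / (a * b); set y := g23 / (b * c); set z := g13 / (a * c).
move=> _ _ k l.
have := Q (k / a) ((- k * x - l * y) / b) (l / c).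
suff -> : (k / a) ^+ 2 * g11 + ((- k * x - l * y) / b) ^+ 2 * g22 + (l / c) ^+ 2 * g33 +
  2 * (k / a) * ((- k * x - l * y) / b) * g12 + 2 * ((- k * x - l * y) / b) * (l / c) * g23 +
  2 * (k / a) * (l / c) * g13 =
  (1 - x ^+ 2) * k ^+ 2 + 2 * (z - x * y) * k * l + (1 - y ^+ 2) * l ^+ 2 by [].
rewrite e1 e2 e3 /x /y /z; field.
by rewrite !lt0r_neq0.
Qed.
End Alg.

Section Sig.
Variables (R : realType) (n : nat).
Notation mu := (@lebesgue_measure R).
Notation sig := (signal R n).

Definition AF : Filter (almost_everywhere mu) := ae_filter_ringOfSetsType _.

Definition intR (f : R -> R) := mu.-integrable setT (EFin \o f).

Lemma intR_D f g : intR f -> intR g -> intR (fun x => f x + g x).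
Proof. move=> hf hg; exact: (integrableD measurableT hf hg). Qed.

Lemma intR_Z k f : intR f -> intR (fun x => k * f x).
Proof. move=> hf; exact: (integrableZl measurableT k hf). Qed.

Lemma sqnorm_ge0 (x : 'rV[R]_n) : 0 <= sqnorm x.
Proof. by rewrite /sqnorm; apply: sumr_ge0 => i _; rewrite sqr_ge0. Qed.

Lemma sqnorm_dot (x : 'rV[R]_n) : sqnorm x = dotv x x.
Proof. by rewrite /sqnorm /dotv; apply: eq_bigr => i _; rewrite expr2. Qed.

Lemma meas_dot (u v : sig) : in_L2 u -> in_L2 v ->
  measurable_fun setT (fun t => dotv (u t) (v t)).
Proof.
move=> [mu_ _] [mv _]; rewrite /dotv.
apply: measurable_sum => i; exact: measurable_realfun.measurable_funM.
Qed.

Lemma dot_bound (x y : 'rV[R]_n) : `|dotv x y| <= sqnorm x + sqnorm y.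
Proof.
rewrite /dotv /sqnorm -big_split /=.
apply: (le_trans (ler_norm_sum _ _ _)); apply: ler_sum => i _.
rewrite normrM.
have h1 := sqr_ge0 (`|x ord0 i| - `|y ord0 i|).
rewrite -[x ord0 i ^+ 2]real_normK ?num_real // -[y ord0 i ^+ 2]real_normK ?num_real //.
nra.
Qed.

Lemma int_sq (u : sig) : in_L2 u -> intR (fun t => sqnorm (u t)).
Proof.
move=> hu; have [mu_ fin] := hu.
apply/integrableP; split.
  apply/measurable_realfun.measurable_EFinP; rewrite (_ : (fun t => _) = fun t => dotv (u t) (u t)).
    exact: meas_dot.
  by apply/funext => t; rewrite sqnorm_dot.
under eq_integral do rewrite /= ger0_norm ?sqnorm_ge0 //.
exact: fin.
Qed.

Lemma int_dot (u v : sig) : in_L2 u -> in_L2 v -> intR (fun t => dotv (u t) (v t)).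
Proof.
move=> hu hv.
have hi := intR_D (int_sq hu) (int_sq hv); rewrite /intR in hi *.
apply: (le_integrable measurableT _ _ hi).
  by apply/measurable_realfun.measurable_EFinP; exact: meas_dot.
move=> t _ /=; rewrite lee_fin.
rewrite (ger0_norm (addr_ge0 (sqnorm_ge0 _) (sqnorm_ge0 _))).
exact: dot_bound.
Qed.


Lemma gram (u1 u2 u3 : sig) : in_L2 u1 -> in_L2 u2 -> in_L2 u3 ->
  forall p q r : R, 0 <= p^+2 * l2inner u1 u1 + q^+2 * l2inner u2 u2 + r^+2 * l2inner u3 u3
        + 2 * p * q * l2inner u1 u2 + 2 * q * r * l2inner u2 u3 + 2 * p * r * l2inner u1 u3.
Proof.
move=> h1 h2 h3 p q r.
have i11 := int_dot h1 h1. have i22 := int_dot h2 h2. have i33 := int_dot h3 h3.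
have i12 := int_dot h1 h2. have i23 := int_dot h2 h3. have i13 := int_dot h1 h3.
rewrite /l2inner -!RintegralZl //.
rewrite -!RintegralD //; try by repeat apply: intR_D; apply: intR_Z.
apply: Rintegral_ge0 => t _.
rewrite /dotv; rewrite !mulr_sumr -!big_split /=.
apply: sumr_ge0 => i _.
set a := u1 t ord0 i; set b := u2 t ord0 i; set c := u3 t ord0 i.
rewrite (_ : _ + _ = (p * a + q * b + r * c) ^+ 2); first exact: sqr_ge0.
ring.
Qed.

Lemma aeq_trans (u v w : sig) : ae_equal u v -> ae_equal v w -> ae_equal u w.
Proof. by move=> h1 h2; move: h1 h2; apply: (@filterS2 _ _ AF) => t -> . Qed.

Lemma aeq_sym (u v : sig) : ae_equal u v -> ae_equal v u.
Proof. by move=> h1; move: h1; apply: (@filterS _ _ AF) => t -> . Qed.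

Lemma aeq_refl (u : sig) : ae_equal u u.
Proof. by apply: (@filterS _ _ AF setT) => //; exact: (@filterT _ _ AF). Qed.

Lemma aeq_Gam T (u v : sig) : ae_equal u v -> ae_equal (Gam T u) (Gam T v).
Proof. by move=> h1; move: h1; apply: (@filterS _ _ AF) => t /= e; rewrite /Gam e. Qed.

Lemma sqnorm_eq0 (x : 'rV[R]_n) : sqnorm x = 0 -> x = 0.
Proof.
move=> h; apply/matrixP => i j; rewrite (ord1 i) mxE.
have := @psumr_eq0P _ _ predT (fun j => x ord0 j ^+ 2) (fun j _ => sqr_ge0 _) h j isT.
by move/eqP; rewrite sqrf_eq0 => /eqP.
Qed.

Lemma sqnorm0 : sqnorm (0 : 'rV[R]_n) = 0.
Proof. by rewrite /sqnorm big1 // => i _; rewrite mxE expr0n. Qed.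

Lemma int_sq_fin (u : sig) : in_L2 u ->
  (\int[mu]_t (sqnorm (u t))%:E)%E = (Rintegral mu setT (fun t => sqnorm (u t)))%:E.
Proof.
move=> [_ fin]; rewrite /Rintegral fineK // ge0_fin_numE //.
by apply: integral_ge0 => t _; rewrite lee_fin sqnorm_ge0.
Qed.

Lemma norm0_ae (v : sig) : in_L2 v -> l2norm v = 0 -> ae_equal v (fun _ => 0).
Proof.
move=> hv h.
have hR : Rintegral mu setT (fun t => sqnorm (v t)) = 0.
  apply/eqP; rewrite eq_le; apply/andP; split.
    by rewrite -sqrtr_eq0; apply/eqP; exact: h.
  by apply: Rintegral_ge0 => t _; exact: sqnorm_ge0.
have hI := int_sq_fin hv; rewrite hR in hI.
have /integrableP[mf _] := int_sq hv.
have H := (ae_eq_integral_abs mu measurableT mf).1.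
idtac.
have H2 : ae_eq mu setT (EFin \o (fun t => sqnorm (v t))) (cst 0%E).
  apply: H; rewrite (_ : 0%E = 0%:E) // -hI; apply: eq_integral => t _ /=.
  by rewrite ger0_norm // sqnorm_ge0.
move: H2; apply: (@filterS _ _ AF) => t /= /(_ I) [] /sqnorm_eq0.
done.
Qed.

Lemma ae_norm0 (v : sig) : in_L2 v -> ae_equal v (fun _ => 0) -> l2norm v = 0.
Proof.
move=> hv h.
have /integrableP[mf _] := int_sq hv.
rewrite /l2norm /Rintegral.
rewrite (ae_eq_integral (cst 0%E)) //.
  by rewrite integral0 /= sqrtr0.
move: h; apply: (@filterS _ _ AF) => t /= -> _.
by rewrite sqnorm0.
Qed.


Lemma meas_sqn (u : sig) : (forall i : 'I_n, measurable_fun setT (fun t => u t ord0 i)) ->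
  measurable_fun setT (fun t => sqnorm (u t)).
Proof.
move=> mu_; rewrite /sqnorm.
apply: measurable_sum => i.
rewrite (_ : (fun t => u t ord0 i ^+ 2) = (fun t => u t ord0 i) \* (fun t => u t ord0 i)).
  exact: measurable_realfun.measurable_funM.
by apply/funext => t /=; rewrite expr2.
Qed.

Lemma Gam_sq T (v : sig) t : sqnorm (Gam T v t) <= sqnorm (v t).
Proof. rewrite /Gam; case: ifP => _ //; rewrite sqnorm0; exact: sqnorm_ge0. Qed.

Lemma L2p_Gam T (v : sig) : in_L2p v -> in_L2p (Gam T v).
Proof.
move=> [[mv fin] hae].
have mG : forall i : 'I_n, measurable_fun setT (fun t => Gam T v t ord0 i).
  move=> i.
  rewrite (_ : (fun t => Gam T v t ord0 i) = (fun t => if t <= T then v t ord0 i else 0)).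
    apply: measurable_fun_ifT => //.
    have := @measurable_realfun.measurable_fun_ler _ R R setT idfun (cst T) (@measurable_id _ R setT) (measurable_cst T). exact.
  by apply/funext => t; rewrite /Gam; case: ifP => _ //; rewrite mxE.
split; [split => // |].
  apply: le_lt_trans (fin).
  apply: ge0_le_integral => //.
  - by move=> t _; rewrite lee_fin sqnorm_ge0.
  - by apply/measurable_realfun.measurable_EFinP; exact: meas_sqn.
  - by apply/measurable_realfun.measurable_EFinP; exact: meas_sqn.
  - by move=> t _; rewrite lee_fin Gam_sq.
move: hae; apply: (@filterS _ _ AF) => t /= h ht.
by rewrite /Gam h //; case: ifP.
Qed.

Lemma L2p_L2ep (v : sig) : in_L2p v -> in_L2ep v.
Proof. by move=> hv T _; exact: L2p_Gam. Qed.

Lemma L2p_0 : in_L2p (fun _ : R => (0 : 'rV[R]_n)).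
Proof.
split; [split|].
- by move=> i; rewrite (_ : (fun t => _) = cst 0); [exact: measurable_cst | apply/funext => t; rewrite mxE].
- rewrite (_ : (fun t => _) = cst 0%E); first by rewrite integral0.
  by apply/funext => t; rewrite sqnorm0.
- by apply: (@filterS _ _ AF setT) => //; exact: (@filterT _ _ AF).
Qed.

Lemma L2ep_0 : in_L2ep (fun _ : R => (0 : 'rV[R]_n)).
Proof. exact: L2p_L2ep L2p_0. Qed.

Lemma L2ep_Gam T (w : sig) : 0 <= T -> in_L2ep w -> in_L2ep (Gam T w).
Proof. by move=> hT hw; apply: L2p_L2ep; exact: hw. Qed.

Lemma L2p_L2 (v : sig) : in_L2p v -> in_L2 v.
Proof. by case. Qed.


Definition Val (P : sig -> sig) (u : sig) := l2inner u (P u) / (l2norm u * l2norm (P u)).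
Definition SSet (P : sig -> sig) := [set u | in_L2p u /\ l2norm u != 0 /\ l2norm (P u) != 0].

Lemma l2norm_sqrt (u : sig) : l2norm u = Num.sqrt (l2inner u u).
Proof. by rewrite /l2norm /l2inner; congr Num.sqrt; apply: eq_Rintegral => t _; rewrite sqnorm_dot. Qed.

Lemma inner_pos (u : sig) : l2norm u != 0 -> 0 < l2inner u u.
Proof.
rewrite l2norm_sqrt sqrtr_eq0 -ltNge //.
Qed.

Lemma val_bound (P : sig -> sig) u : in_L2 u -> in_L2 (P u) -> l2norm u != 0 -> l2norm (P u) != 0 ->
  -1 <= Val P u <= 1.
Proof.
move=> h1 h2 n1 n2; rewrite /Val !l2norm_sqrt.
apply: cs2; try exact: inner_pos.
move=> p q; have := gram h1 h2 h1 p q 0.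
by rewrite !(expr0n, mul0r, mulr0, addr0).
Qed.

Lemma angle_el (u1 u2 u3 : sig) : in_L2 u1 -> in_L2 u2 -> in_L2 u3 ->
  l2norm u1 != 0 -> l2norm u2 != 0 -> l2norm u3 != 0 ->
  cos (acos (l2inner u1 u2 / (l2norm u1 * l2norm u2)) + acos (l2inner u2 u3 / (l2norm u2 * l2norm u3)))
   <= l2inner u1 u3 / (l2norm u1 * l2norm u3).
Proof.
move=> h1 h2 h3 n1 n2 n3; rewrite !l2norm_sqrt.
apply: tri3; try exact: inner_pos.
exact: gram.
Qed.

Lemma sys_zero (P : sig -> sig) : is_system P -> forall v, in_L2ep v -> ae_equal v (fun _ => 0) ->
  ae_equal (P v) (fun _ => 0).
Proof.
move=> [_ [hc [h0 _]]] v hv hz.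
apply: aeq_trans h0; apply: hc => //; exact: L2ep_0.
Qed.


Lemma exists_T (w : sig) : in_L2ep w -> ~ ae_equal w (fun _ => 0) ->
  exists T, 0 <= T /\ ~ ae_equal (Gam T w) (fun _ => 0).
Proof.
move=> hw hn.
case: (pselect (exists T, 0 <= T /\ ~ ae_equal (Gam T w) (fun _ => 0))) => // hne.
exfalso; apply: hn.
have H : forall T, 0 <= T -> ae_equal (Gam T w) (fun _ => 0).
  by move=> T hT; apply: contrapT => hT'; apply: hne; exists T.
have Hn : \forall t \ae mu, forall k : nat, Gam k%:R w t = 0.
  by apply: ae_foralln => k; exact: (H k%:R (ler0n _ _)).
have H0 := (hw 0 (lexx 0)).2.
move: Hn H0; apply: (@filterS2 _ _ AF) => t hk h0.
have [tn|tp] := ltrP t 0.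
  by have := h0 tn; rewrite /Gam (ltW tn).
have := hk (Num.trunc t).+1; rewrite /Gam (ltW (truncnS_gt t)) //.
Qed.

Lemma Gam_zero T : ae_equal (Gam T (fun _ : R => (0 : 'rV[R]_n))) (fun _ => 0).
Proof.
apply: (@filterS _ _ AF setT) => [t _|]; last exact: (@filterT _ _ AF).
by rewrite /Gam; case: ifP.
Qed.

Lemma exists_dom (P1 P2 : sig -> sig) : causal_stable_system P1 -> causal_stable_system P2 ->
  is_system (P2 \o P1) -> exists v, SSet (P2 \o P1) v.
Proof.
move=> [hs1 c1 st1] [hs2 c2 st2] [_ [_ [_ [u [hu hnz]]]]].
have hs1' := hs1; have hs2' := hs2.
move: hs1' hs2' => [e1 [cg1 _]] [e2 [cg2 _]].
have hP1u := e1 u hu.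
have [T [hT hTn]] := exists_T (e2 _ hP1u) hnz.
set v := Gam T u.
have hv : in_L2p v := hu T hT.
have hvep := L2p_L2ep hv.
have hP1v := st1.1 v hv.
have hPv := st2.1 _ hP1v.
have A := c1 u hu T hT.
have B := c2 (P1 u) hP1u T hT.
have C := c2 (P1 v) (L2p_L2ep hP1v) T hT.
have D := cg2 _ _ (L2ep_Gam hT hP1u) (L2ep_Gam hT (L2p_L2ep hP1v)) A.
have E := aeq_trans B (aeq_trans (aeq_Gam T D) (aeq_sym C)).
have nPv : ~ ae_equal (P2 (P1 v)) (fun _ => 0).
  move=> hz; apply: hTn; apply: aeq_trans E _.
  apply: aeq_trans (aeq_Gam T hz) _; exact: Gam_zero.
exists v; split => //; split.
  apply/eqP => hn0; apply: nPv.
  apply: (sys_zero hs2 (L2p_L2ep hP1v)).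
  exact: (sys_zero hs1 hvep (norm0_ae (L2p_L2 hv) hn0)).
apply/eqP => hn0; apply: nPv.
exact: (norm0_ae (L2p_L2 hPv) hn0).
Qed.


Lemma elem (P1 P2 : sig -> sig) u : causal_stable_system P1 -> causal_stable_system P2 ->
  SSet (P2 \o P1) u ->
  [/\ SSet P1 u, SSet P2 (P1 u) & cos (acos (Val P1 u) + acos (Val P2 (P1 u))) <= Val (P2 \o P1) u].
Proof.
move=> [hs1 c1 st1] [hs2 c2 st2] [hu [n1 n3]].
have hP1u := st1.1 u hu.
have hPu := st2.1 _ hP1u.
have n2 : l2norm (P1 u) != 0.
  apply/eqP => h0; move/eqP: n3; apply.
  apply: (ae_norm0 (L2p_L2 hPu)).
  exact: (sys_zero hs2 (L2p_L2ep hP1u) (norm0_ae (L2p_L2 hP1u) h0)).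
split; [by split => //| by split => // |].
exact: (angle_el (L2p_L2 hu) (L2p_L2 hP1u) (L2p_L2 hPu) n1 n2 n3).
Qed.

Lemma img_bound (P : sig -> sig) : (forall u, in_L2p u -> in_L2p (P u)) ->
  forall z, [set Val P u | u in SSet P] z -> -1 <= z <= 1.
Proof.
move=> st z [u [hu [n1 n2]] <-].
exact: (val_bound (L2p_L2 hu) (L2p_L2 (st u hu)) n1 n2).
Qed.

Lemma inf_bounds (S : set R) z : S z -> (forall z, S z -> -1 <= z <= 1) ->
  -1 <= inf S <= 1 /\ inf S <= z.
Proof.
move=> Sz hb.
have lb : lbound S (-1) by move=> y /hb /andP[].
have hlb : has_lbound S by exists (-1).
have iz : inf S <= z := ge_inf hlb Sz.
split => //; apply/andP; split.
  by apply: lb_le_inf => //; exists z.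
by apply: le_trans iz _; have /andP[] := hb z Sz.
Qed.

Lemma main (P1 P2 : sig -> sig) : causal_stable_system P1 -> causal_stable_system P2 ->
  is_system (P2 \o P1) ->
  acos (inf [set Val (P2 \o P1) u | u in SSet (P2 \o P1)]) <=
  acos (inf [set Val P1 u | u in SSet P1]) + acos (inf [set Val P2 u | u in SSet P2]).
Proof.
move=> h1 h2 hs.
have h1' := h1; have h2' := h2.
move: h1' h2' => [_ _ st1] [_ _ st2].
set S := [set Val (P2 \o P1) u | u in SSet (P2 \o P1)].
set S1 := [set Val P1 u | u in SSet P1].
set S2 := [set Val P2 u | u in SSet P2].
have stP : forall u, in_L2p u -> in_L2p ((P2 \o P1) u).
  by move=> u hu; apply: st2.1; apply: st1.1.
have bS := img_bound stP.
have bS1 := img_bound st1.1.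
have bS2 := img_bound st2.1.
have [v hv] := exists_dom h1 h2 hs.
have Sv : S (Val (P2 \o P1) v) by exists v.
have [mS _] := inf_bounds Sv bS.
have [e1 e2 _] := elem h1 h2 hv.
have S1v : S1 (Val P1 v) by exists v.
have S2v : S2 (Val P2 (P1 v)) by exists (P1 v).
have [m1 _] := inf_bounds S1v bS1.
have [m2 _] := inf_bounds S2v bS2.
set a := acos (inf S1); set b := acos (inf S2).
have a0 : 0 <= a by apply: acos_ge0.
have b0 : 0 <= b by apply: acos_ge0.
have [piab|abpi] := leP pi (a + b).
  by apply: le_trans piab; apply: acos_lepi.
have abI : a + b \in `[0, pi] by rewrite in_itv /= addr_ge0 // ltW.
have cS : cos (a + b) <= inf S.
  apply: lb_le_inf; first by exists (Val (P2 \o P1) v).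
  move=> z [u hu <-].
  have [s1 s2 hc] := elem h1 h2 hu.
  have S1u : S1 (Val P1 u) by exists u.
  have S2u : S2 (Val P2 (P1 u)) by exists (P1 u).
  have [_ i1] := inf_bounds S1u bS1.
  have [_ i2] := inf_bounds S2u bS2.
  have /andP[x1 x2] := bS1 _ S1u.
  have /andP[y1 y2] := bS2 _ S2u.
  have /andP[mm1 _] := m1.
  have /andP[mm2 _] := m2.
  have ax : acos (Val P1 u) <= a by apply: acos_le.
  have ay : acos (Val P2 (P1 u)) <= b by apply: acos_le.
  have ax0 : 0 <= acos (Val P1 u) by apply: acos_ge0; rewrite x1 x2.
  have ay0 : 0 <= acos (Val P2 (P1 u)) by apply: acos_ge0; rewrite y1 y2.
  apply: le_trans hc.
  have xyI : acos (Val P1 u) + acos (Val P2 (P1 u)) \in `[0, pi].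
    rewrite in_itv /= addr_ge0 //=; apply: le_trans (ltW abpi); exact: lerD.
  rewrite leNgt ltr_cos // -leNgt; exact: lerD.
have /andP[_ mS1] := mS.
apply: le_trans (acos_le (cos_geN1 _) cS mS1) _.
by rewrite cosK.
Qed.

End Sig.

Theorem proposition1 (R : realType) (n : nat) (hn : (0 < n)%N)
  (P1 P2 : signal R n -> signal R n) :
  causal_stable_system P1 -> causal_stable_system P2 ->
  is_system (P2 \o P1) ->
  singular_angle (P2 \o P1) <= singular_angle P1 + singular_angle P2.
Proof. move=> h1 h2 hs; exact: (main h1 h2 hs). Qed.
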